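(* Let $T$ be a non-degenerate T-graph, $F$ a spanning forest of $T$, and $F^\dagger$ its dual forest equipped with an orientation in which each connected component is oriented towards a chosen end. Then $M(F^\dagger)$ is a perfect matching of the hexagonal lattice $\mathcal H$.
   Context: Setup. $\mathcal H$ is the hexagonal lattice with black/white bipartition, $\mathcal H^\dagger$ its dual triangular lattice. A T-graph $T=\psi(\mathcal H^\dagger)\subset\mathbb C$ (built from a triangle $\Delta$ and a unit complex number $\lambda$) is such that each black vertex $b$ of $\mathcal H$ corresponds to a segment $\psi(b)$ and each white vertex $w$ to a triangular face $\psi(w)$ of $T$; if an edge of $T$ lies on $\psi(b)$ and on the boundary of $\psi(w)$ then $b$ and $w$ are adjacent in $\mathcal H$. Non-degenerate: every vertex of $T$ lies in exactly three segments, being an endpoint of two and in the interior of exactly one, and no face is degenerate; each segment contains exactly one vertex of $T$ in its interior. $T$ is a directed graph: from each vertex $v$ there are two outgoing edges, towards the two endpoints of the segment containing $v$ in its interior. A spanning forest $F$ of $T$ is a set of directed edges such that every vertex has exactly one outgoing edge in $F$ and $F$ contains no cycle even ignoring orientation. The dual $F^\dagger$ is the graph whose vertices are the faces of $T$, with an edge between two faces across each edge of $T$ not in $F$; it is a spanning forest with no finite component; each component is oriented towards a chosen end. Definition of $M(F^\dagger)$: for each white $w$, the unique outgoing edge of $F^\dagger$ from $\psi(w)$ crosses an edge of $T$ lying on a segment $\psi(b)$ with $b$ adjacent to $w$; $w$ is matched to this $b$. *)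

(* Defs.v *)
From Stdlib Require Import Reals ZArith List Relations.
Import ListNotations.
Open Scope R_scope.

Definition pt := (R * R)%type.

Definition conv3 (a b c z : pt) : Prop :=
  exists t1 t2 t3 : R, 0 <= t1 /\ 0 <= t2 /\ 0 <= t3 /\ t1 + t2 + t3 = 1 /\
    fst z = t1 * fst a + t2 * fst b + t3 * fst c /\
    snd z = t1 * snd a + t2 * snd b + t3 * snd c.

Definition oconv3 (a b c z : pt) : Prop :=
  exists t1 t2 t3 : R, 0 < t1 /\ 0 < t2 /\ 0 < t3 /\ t1 + t2 + t3 = 1 /\
    fst z = t1 * fst a + t2 * fst b + t3 * fst c /\
    snd z = t1 * snd a + t2 * snd b + t3 * snd c.

Definition collinear (a b c : pt) : Prop :=
  (fst b - fst a) * (snd c - snd a) - (snd b - snd a) * (fst c - fst a) = 0.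

Definition strictly_between (x y z : pt) : Prop :=
  x <> y /\ exists t : R, 0 < t < 1 /\
    fst z = (1 - t) * fst x + t * fst y /\ snd z = (1 - t) * snd x + t * snd y.

Definition closed_seg (x y z : pt) : Prop :=
  exists t : R, 0 <= t <= 1 /\
    fst z = (1 - t) * fst x + t * fst y /\ snd z = (1 - t) * snd x + t * snd y.

Definition extreme (X : pt -> Prop) (z : pt) : Prop :=
  X z /\ ~ (exists x y, X x /\ X y /\ strictly_between x y z).
Definition rel_interior (X : pt -> Prop) (z : pt) : Prop :=
  X z /\ ~ extreme X z.

(* ---------- Hexagonal lattice H and its dual triangular lattice ----------
   Faces of H (= vertices of H^dagger) are indexed by Z x Z, the triangular
   lattice with steps (1,0), (0,1), (-1,1).  A white vertex w = (x,y) of H is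
   the upward triangle {(x,y),(x+1,y),(x,y+1)}; a black vertex b = (x,y) is
   the downward triangle {(x+1,y),(x,y+1),(x+1,y+1)}.  Adjacency in H =
   sharing an edge of H^dagger. *)
Definition Face  := (Z * Z)%type.
Definition White := (Z * Z)%type.
Definition Black := (Z * Z)%type.

Definition adjH (w : White) (b : Black) : Prop :=
  b = w \/ b = (fst w, (snd w - 1)%Z) \/ b = ((fst w - 1)%Z, snd w).

Definition Seg (psi : Face -> pt) (b : Black) : pt -> Prop :=
  conv3 (psi ((fst b + 1)%Z, snd b)) (psi (fst b, (snd b + 1)%Z))
        (psi ((fst b + 1)%Z, (snd b + 1)%Z)).

Definition Tri (psi : Face -> pt) (w : White) : pt -> Prop :=
  conv3 (psi w) (psi ((fst w + 1)%Z, snd w)) (psi (fst w, (snd w + 1)%Z)).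
Definition TriInt (psi : Face -> pt) (w : White) : pt -> Prop :=
  oconv3 (psi w) (psi ((fst w + 1)%Z, snd w)) (psi (fst w, (snd w + 1)%Z)).
Definition TriBdry (psi : Face -> pt) (w : White) (z : pt) : Prop :=
  Tri psi w z /\ ~ TriInt psi w z.

(* T-graph: black vertices go to segments, and the faces of the planar
   graph T (= union of the segments) are exactly the triangles psi(w). *)
Definition is_Tgraph (psi : Face -> pt) : Prop :=
  (forall b : Black,
      collinear (psi ((fst b + 1)%Z, snd b)) (psi (fst b, (snd b + 1)%Z))
                (psi ((fst b + 1)%Z, (snd b + 1)%Z))) /\
  (forall (w w' : White) z, TriInt psi w z -> TriInt psi w' z -> w = w') /\
  (forall (w : White) (b : Black) z, TriInt psi w z -> ~ Seg psi b z) /\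
  (forall z : pt, (forall b : Black, ~ Seg psi b z) ->
      exists w : White, TriInt psi w z).

Definition nondegenerate (psi : Face -> pt) : Prop :=
  (forall f : Face, exists b1 b2 b3 : Black,
      b1 <> b2 /\ b1 <> b3 /\ b2 <> b3 /\
      (forall b, Seg psi b (psi f) <-> (b = b1 \/ b = b2 \/ b = b3)) /\
      extreme (Seg psi b1) (psi f) /\ extreme (Seg psi b2) (psi f) /\
      rel_interior (Seg psi b3) (psi f)) /\
  (forall w : White,
      ~ collinear (psi w) (psi ((fst w + 1)%Z, snd w))
                  (psi (fst w, (snd w + 1)%Z))) /\
  (forall b : Black, exists! f : Face, rel_interior (Seg psi b) (psi f)).

Definition Tedge (psi : Face -> pt) (v v' : Face) : Prop :=
  exists b : Black, rel_interior (Seg psi b) (psi v) /\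
                    extreme (Seg psi b) (psi v').

Fixpoint chain {A : Type} (U : A -> A -> Prop) (l : list A) : Prop :=
  match l with
  | a :: ((b :: _) as t) => U a b /\ chain U t
  | _ => True
  end.

Definition no_cycle (F : Face -> Face -> Prop) : Prop :=
  ~ (exists a b, a <> b /\ F a b /\ F b a) /\
  ~ (exists l : list Face, (3 <= length l)%nat /\ NoDup l /\
       chain (fun a b => F a b \/ F b a) (l ++ firstn 1 l)).

Definition spanning_forest (psi : Face -> pt) (F : Face -> Face -> Prop) : Prop :=
  (forall v v', F v v' -> Tedge psi v v') /\
  (forall v, exists! v', F v v') /\
  no_cycle F.

(* Dual graph F^dagger: edge between faces psi(w), psi(w') across the
   edge (v,v') of T not in F (the edge lies on the boundary of both). *)
Definition DualEdge (psi : Face -> pt) (F : Face -> Face -> Prop)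
    (v v' : Face) (w w' : White) : Prop :=
  Tedge psi v v' /\ ~ F v v' /\ w <> w' /\
  (forall z, closed_seg (psi v) (psi v') z -> TriBdry psi w z /\ TriBdry psi w' z).

Definition dual_connected (psi : Face -> pt) (F : Face -> Face -> Prop) :
    White -> White -> Prop :=
  clos_refl_trans White (fun u u' => exists v v', DualEdge psi F v v' u u').

(* An orientation of F^dagger, given by o w = ((crossed edge of T), head);
   every dual edge is oriented one way, every vertex has exactly one
   outgoing edge, the outgoing paths are rays, and in each component all
   rays are eventually equal, i.e. the component is oriented towards one end. *)
Definition step (o : White -> (Face * Face) * White) (w : White) : White :=
  snd (o w).

Definition oriented_towards_ends (psi : Face -> pt) (F : Face -> Face -> Prop)
    (o : White -> (Face * Face) * White) : Prop :=
  (forall w, DualEdge psi F (fst (fst (o w))) (snd (fst (o w))) w (snd (o w))) /\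
  (forall v v' w w', DualEdge psi F v v' w w' ->
      (o w = ((v, v'), w') \/ o w' = ((v, v'), w)) /\
      ~ (o w = ((v, v'), w') /\ o w' = ((v, v'), w))) /\
  (forall w (n m : nat), Nat.iter n (step o) w = Nat.iter m (step o) w -> n = m) /\
  (forall w w', dual_connected psi F w w' ->
      exists n m : nat, forall k : nat,
        Nat.iter (n + k) (step o) w = Nat.iter (m + k) (step o) w').

(* M(F^dagger): w is matched to b when the outgoing edge of w crosses an
   edge of T lying on psi(b), with b adjacent to w. *)
Definition matchedM (psi : Face -> pt) (o : White -> (Face * Face) * White)
    (w : White) (b : Black) : Prop :=
  adjH w b /\
  (forall z, closed_seg (psi (fst (fst (o w)))) (psi (snd (fst (o w)))) z ->
             Seg psi b z).

Definition perfect_matching (M : White -> Black -> Prop) : Prop :=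
  (forall w b, M w b -> adjH w b) /\
  (forall w : White, exists! b : Black, M w b) /\
  (forall b : Black, exists! w : White, M w b).

(* Main.v *)
Require Import Defs.
From Stdlib Require Import Reals ZArith List Relations Lra Lia Classical.
Open Scope R_scope.

Lemma bary_unique (a b c : pt) t1 t2 t3 s1 s2 s3 :
  ~ collinear a b c -> t1 + t2 + t3 = 1 -> s1 + s2 + s3 = 1 ->
  t1 * fst a + t2 * fst b + t3 * fst c = s1 * fst a + s2 * fst b + s3 * fst c ->
  t1 * snd a + t2 * snd b + t3 * snd c = s1 * snd a + s2 * snd b + s3 * snd c ->
  t1 = s1 /\ t2 = s2 /\ t3 = s3.
Proof.
  destruct a as [ax ay], b as [bx by0], c as [cx cy]; unfold collinear; simpl.
  intros Hc Ht Hs E1 E2.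
  assert (T3: t3 = 1 - t1 - t2) by lra. assert (S3: s3 = 1 - s1 - s2) by lra.
  subst t3 s3.
  set (det := (bx - ax) * (cy - ay) - (by0 - ay) * (cx - ax)).
  assert (K1: (t1 - s1) * det =
    (by0 - cy) * ((t1 * ax + t2 * bx + (1 - t1 - t2) * cx) - (s1 * ax + s2 * bx + (1 - s1 - s2) * cx))
    - (bx - cx) * ((t1 * ay + t2 * by0 + (1 - t1 - t2) * cy) - (s1 * ay + s2 * by0 + (1 - s1 - s2) * cy)))
    by (unfold det; ring).
  assert (K2: (t2 - s2) * det =
    (cy - ay) * ((t1 * ax + t2 * bx + (1 - t1 - t2) * cx) - (s1 * ax + s2 * bx + (1 - s1 - s2) * cx))
    - (cx - ax) * ((t1 * ay + t2 * by0 + (1 - t1 - t2) * cy) - (s1 * ay + s2 * by0 + (1 - s1 - s2) * cy)))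
    by (unfold det; ring).
  rewrite E1, E2 in K1, K2. rewrite !Rminus_diag in K1, K2.
  assert (Z1: (t1 - s1) * det = 0) by lra.
  assert (Z2: (t2 - s2) * det = 0) by lra.
  apply Rmult_integral in Z1; apply Rmult_integral in Z2.
  destruct Z1 as [Z1|Z1]; [|contradiction].
  destruct Z2 as [Z2|Z2]; [|contradiction].
  lra.
Qed.

Lemma conv3_12 a b c z : conv3 a b c z -> conv3 b a c z.
Proof. intros (t1&t2&t3&?&?&?&?&E1&E2). exists t2, t1, t3. repeat split; lra. Qed.
Lemma conv3_23 a b c z : conv3 a b c z -> conv3 a c b z.
Proof. intros (t1&t2&t3&?&?&?&?&E1&E2). exists t1, t3, t2. repeat split; lra. Qed.
Lemma oconv3_12 a b c z : oconv3 a b c z -> oconv3 b a c z.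
Proof. intros (t1&t2&t3&?&?&?&?&E1&E2). exists t2, t1, t3. repeat split; lra. Qed.
Lemma oconv3_23 a b c z : oconv3 a b c z -> oconv3 a c b z.
Proof. intros (t1&t2&t3&?&?&?&?&E1&E2). exists t1, t3, t2. repeat split; lra. Qed.
Lemma ncol_12 a b c : ~ collinear a b c -> ~ collinear b a c.
Proof. unfold collinear; intros H E; apply H. lra. Qed.
Lemma ncol_23 a b c : ~ collinear a b c -> ~ collinear a c b.
Proof. unfold collinear; intros H E; apply H. lra. Qed.
Lemma cseg_sym x y z : closed_seg x y z -> closed_seg y x z.
Proof. intros (t&?&E1&E2). exists (1-t). repeat split; lra. Qed.

Lemma seg_core a b c z : ~ collinear a b c -> closed_seg a b z ->
  conv3 a b c z /\ ~ oconv3 a b c z.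
Proof.
  intros Hc (t&Ht&E1&E2). split.
  - exists (1-t), t, 0. repeat split; lra.
  - intros (s1&s2&s3&?&?&?&?&F1&F2).
    destruct (bary_unique a b c s1 s2 s3 (1-t) t 0 Hc) as (_&_&?); try lra.
Qed.

Lemma side3 a b c z : ~ collinear a b c ->
  (closed_seg a b z \/ closed_seg b a z \/ closed_seg a c z \/ closed_seg c a z \/
   closed_seg b c z \/ closed_seg c b z) ->
  conv3 a b c z /\ ~ oconv3 a b c z.
Proof.
  intros Hc H.
  assert (Hab: closed_seg a b z -> conv3 a b c z /\ ~ oconv3 a b c z) by (apply seg_core; auto).
  assert (Hac: closed_seg a c z -> conv3 a b c z /\ ~ oconv3 a b c z).
  { intro S. destruct (seg_core a c b z (ncol_23 _ _ _ Hc) S) as [X Y].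
    split; [apply conv3_23; auto| intro O; apply Y; apply oconv3_23; auto]. }
  assert (Hbc: closed_seg b c z -> conv3 a b c z /\ ~ oconv3 a b c z).
  { intro S. destruct (seg_core b c a z) as [X Y]; auto.
    - intro K; apply Hc. unfold collinear in *; lra.
    - split. apply conv3_12, conv3_23; auto.
      intro O; apply Y. apply oconv3_23, oconv3_12; auto. }
  destruct H as [S|[S|[S|[S|[S|S]]]]]; auto using cseg_sym.
Qed.

Lemma cseg_conv_12 x y r z : closed_seg x y z -> conv3 x y r z.
Proof. intros (t&?&E1&E2). exists (1-t), t, 0. repeat split; lra. Qed.
Lemma cseg_conv_13 x y r z : closed_seg x y z -> conv3 x r y z.
Proof. intros (t&?&E1&E2). exists (1-t), 0, t. repeat split; lra. Qed.
Lemma cseg_conv_23 x y r z : closed_seg x y z -> conv3 r x y z.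
Proof. intros (t&?&E1&E2). exists 0, (1-t), t. repeat split; lra. Qed.

Lemma cseg_l x y : closed_seg x y x.
Proof. exists 0. repeat split; lra. Qed.
Lemma cseg_r x y : closed_seg x y y.
Proof. exists 1. repeat split; lra. Qed.

Lemma white_side a b c p q : ~ collinear a b c ->
  (forall z, closed_seg p q z -> conv3 a b c z /\ ~ oconv3 a b c z) ->
  (forall z, closed_seg p q z -> closed_seg b c z) \/
  (forall z, closed_seg p q z -> closed_seg a c z) \/
  (forall z, closed_seg p q z -> closed_seg a b z).
Proof.
  intros Hc H.
  destruct (H p (cseg_l p q)) as [(u1&u2&u3&?&?&?&?&P1&P2) _].
  destruct (H q (cseg_r p q)) as [(v1&v2&v3&?&?&?&?&Q1&Q2) _].
  set (m := ((fst p + fst q)/2, (snd p + snd q)/2)).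
  assert (Hm: closed_seg p q m) by (exists (1/2); unfold m; simpl; repeat split; lra).
  destruct (H m Hm) as [(s1&s2&s3&?&?&?&?&M1&M2) Hn].
  unfold m in M1, M2; simpl in M1, M2.
  destruct (bary_unique a b c s1 s2 s3 ((u1+v1)/2) ((u2+v2)/2) ((u3+v3)/2) Hc) as (e1&e2&e3);
    [lra|lra| rewrite <- M1, P1, Q1; field | rewrite <- M2, P2, Q2; field|].
  assert (Z: s1 = 0 \/ s2 = 0 \/ s3 = 0).
  { destruct (Rtotal_order s1 0) as [?|[?|?]]; [lra|auto|].
    destruct (Rtotal_order s2 0) as [?|[?|?]]; [lra|auto|].
    destruct (Rtotal_order s3 0) as [?|[?|?]]; [lra|auto|].
    exfalso; apply Hn. exists s1, s2, s3. unfold m; simpl. repeat split; auto. }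
  destruct Z as [Z|[Z|Z]].
  - left. intros z (t&?&E1&E2).
    assert (u1 = 0) by lra. assert (v1 = 0) by lra. subst u1 v1.
    assert (u2 = 1 - u3) by lra. assert (v2 = 1 - v3) by lra. subst u2 v2.
    exists ((1-t)*u3 + t*v3). split; [split; nra|].
    rewrite E1, E2, P1, P2, Q1, Q2. split; ring.
  - right; left. intros z (t&?&E1&E2).
    assert (u2 = 0) by lra. assert (v2 = 0) by lra. subst u2 v2.
    assert (u1 = 1 - u3) by lra. assert (v1 = 1 - v3) by lra. subst u1 v1.
    exists ((1-t)*u3 + t*v3). split; [split; nra|].
    rewrite E1, E2, P1, P2, Q1, Q2. split; ring.
  - right; right. intros z (t&?&E1&E2).
    assert (u3 = 0) by lra. assert (v3 = 0) by lra. subst u3 v3.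
    assert (u1 = 1 - u2) by lra. assert (v1 = 1 - v2) by lra. subst u1 v1.
    exists ((1-t)*u2 + t*v2). split; [split; nra|].
    rewrite E1, E2, P1, P2, Q1, Q2. split; ring.
Qed.

Lemma nonext_gen (S : pt -> Prop) b c d :
  (forall z, S z <-> conv3 b c d z) -> ~ extreme S d -> closed_seg b c d.
Proof.
  intros HS Hn.
  assert (Sd: S d) by (apply HS; exists 0, 0, 1; repeat split; lra).
  apply NNPP; intro Hc. apply Hn. split; auto.
  intros (x&y&Sx&Sy&Hb). apply HS in Sx, Sy.
  destruct Sx as (x1&x2&x3&?&?&?&?&X1&X2).
  destruct Sy as (y1&y2&y3&?&?&?&?&Y1&Y2).
  destruct Hb as (Hxy&t&Ht&D1&D2).
  set (g := (1-t)*x3 + t*y3).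
  destruct (Req_dec g 1) as [G|G].
  - assert (A1: (1-t)*(1-x3) = 0 /\ t*(1-y3) = 0).
    { unfold g in G. assert (0 <= (1-t)*(1-x3)) by nra. assert (0 <= t*(1-y3)) by nra. lra. }
    destruct A1 as [A1 A2].
    apply Rmult_integral in A1; apply Rmult_integral in A2.
    assert (x3 = 1) by (destruct A1; lra). assert (y3 = 1) by (destruct A2; lra).
    assert (x1 = 0) by lra. assert (x2 = 0) by lra. assert (y1 = 0) by lra. assert (y2 = 0) by lra.
    subst. apply Hxy. destruct x, y; simpl in *. f_equal; lra.
  - apply Hc.
    assert (g <= 1) by (unfold g; nra).
    assert (g < 1) by lra.
    set (be := (1-t)*x2 + t*y2).
    exists (be / (1 - g)).
    assert (0 <= be) by (unfold be; nra).
    assert (al: (1-t)*x1 + t*y1 = 1 - g - be) by (unfold g, be; nra).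
    split.
    + split. unfold Rdiv; apply Rle_mult_inv_pos; lra.
      apply (Rmult_le_reg_r (1-g)); [lra|]. unfold Rdiv. rewrite Rmult_assoc, Rinv_l by lra.
      assert (0 <= (1-t)*x1 + t*y1) by nra. lra.
    + assert (K1: fst d * (1-g) = (1-g-be)*fst b + be*fst c).
      { rewrite <- al. replace (fst d * (1-g)) with (fst d - g * fst d) by ring. rewrite D1 at 1. rewrite X1, Y1. unfold g, be. ring. }
      assert (K2: snd d * (1-g) = (1-g-be)*snd b + be*snd c).
      { rewrite <- al. replace (snd d * (1-g)) with (snd d - g * snd d) by ring. rewrite D2 at 1. rewrite X2, Y2. unfold g, be. ring. }
      split; apply (Rmult_eq_reg_r (1-g)); try lra.
      * rewrite K1. field. lra.
      * rewrite K2. field. lra.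
Qed.

Open Scope Z_scope.

Definition vertB (b f : Z * Z) : Prop :=
  (fst f = fst b + 1 /\ snd f = snd b) \/ (fst f = fst b /\ snd f = snd b + 1) \/
  (fst f = fst b + 1 /\ snd f = snd b + 1).
Definition vertW (w f : Z * Z) : Prop :=
  (fst f = fst w /\ snd f = snd w) \/ (fst f = fst w + 1 /\ snd f = snd w) \/
  (fst f = fst w /\ snd f = snd w + 1).

Lemma neq_pair (f g : Z * Z) : f <> g -> fst f <> fst g \/ snd f <> snd g.
Proof.
  destruct f as [f1 f2], g as [g1 g2]; simpl; intros H.
  destruct (Z.eq_dec f1 g1); destruct (Z.eq_dec f2 g2); subst; auto.
Qed.
Lemma eq_pair (f g : Z * Z) : fst f = fst g -> snd f = snd g -> f = g.
Proof. destruct f, g; simpl; intros; subst; auto. Qed.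

Ltac zsolve := repeat match goal with
  | H : ?f <> ?g |- _ => match type of f with (Z*Z)%type => apply neq_pair in H end
  end; unfold vertB, vertW in *;
  repeat match goal with
  | H : _ \/ _ |- _ => match type of H with
        | (_ = _ /\ _) \/ _ => destruct H as [[? ?]|H]
        | _ => fail end
  | H : _ = _ /\ _ = _ |- _ => destruct H
  end; lia.

Lemma pair_black b b' f g : vertB b f -> vertB b g -> vertB b' f -> vertB b' g -> f <> g -> b = b'.
Proof. intros; apply eq_pair; zsolve. Qed.

Lemma vert_third b d t : vertB b d -> vertB b t -> d <> t ->
  exists q, vertB b q /\ q <> d /\ q <> t.
Proof.
  intros Hd Ht Hn. apply neq_pair in Hn.
  destruct Hd as [[D1 D2]|[[D1 D2]|[D1 D2]]]; destruct Ht as [[T1 T2]|[[T1 T2]|[T1 T2]]];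
  try (exfalso; lia).
  all: first [ exists (fst b, snd b + 1); unfold vertB; simpl; split; [lia| split; intro E; subst; simpl in *; lia]
              | exists (fst b + 1, snd b); unfold vertB; simpl; split; [lia| split; intro E; subst; simpl in *; lia]
              | exists (fst b + 1, snd b + 1); unfold vertB; simpl; split; [lia| split; intro E; subst; simpl in *; lia] ].
Qed.

Lemma vert_pigeon b v t x y : vertB b v -> vertB b t -> vertB b x -> vertB b y ->
  v <> t -> v <> x -> v <> y -> t <> x -> t <> y -> x = y.
Proof.
  intros. apply NNPP; intro. zsolve.
Qed.

Lemma three_common w b f g h : vertW w f -> vertW w g -> vertW w h ->
  vertB b f -> vertB b g -> vertB b h -> f <> g -> f <> h -> g <> h -> False.
Proof. intros. zsolve. Qed.

Lemma white_pair b f g : vertB b f -> vertB b g -> f <> g ->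
  exists w, adjH w b /\ vertW w f /\ vertW w g.
Proof.
  intros Hf Hg Hn. apply neq_pair in Hn. destruct b as [b1 b2]. unfold adjH.
  destruct Hf as [[D1 D2]|[[D1 D2]|[D1 D2]]]; destruct Hg as [[T1 T2]|[[T1 T2]|[T1 T2]]];
  simpl in *; try (exfalso; lia).
  all: first
    [ exists (b1, b2); split; [left; reflexivity| unfold vertW; simpl; lia]
    | exists (b1, b2 + 1); split; [right; left; apply eq_pair; simpl; lia | unfold vertW; simpl; lia]
    | exists (b1 + 1, b2); split; [right; right; apply eq_pair; simpl; lia | unfold vertW; simpl; lia] ].
Qed.

Open Scope R_scope.

Lemma conv3_v1 a b c : conv3 a b c a.
Proof. exists 1, 0, 0; repeat split; lra. Qed.
Lemma conv3_v2 a b c : conv3 a b c b.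
Proof. exists 0, 1, 0; repeat split; lra. Qed.
Lemma conv3_v3 a b c : conv3 a b c c.
Proof. exists 0, 0, 1; repeat split; lra. Qed.

Lemma vert_seg psi b f : vertB b f -> Seg psi b (psi f).
Proof.
  unfold vertB, Seg; intros [[E1 E2]|[[E1 E2]|[E1 E2]]].
  - replace f with ((fst b + 1)%Z, snd b) by (apply eq_pair; simpl; lia). apply conv3_v1.
  - replace f with (fst b, (snd b + 1)%Z) by (apply eq_pair; simpl; lia). apply conv3_v2.
  - replace f with ((fst b + 1)%Z, (snd b + 1)%Z) by (apply eq_pair; simpl; lia). apply conv3_v3.
Qed.

Lemma pigeon4 (c1 c2 c3 x y z u : Z * Z) : c1 <> c2 -> c1 <> c3 -> c2 <> c3 ->
  (x = c1 \/ x = c2 \/ x = c3) -> (y = c1 \/ y = c2 \/ y = c3) ->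
  (z = c1 \/ z = c2 \/ z = c3) -> (u = c1 \/ u = c2 \/ u = c3) ->
  x <> y -> x <> z -> y <> z -> u <> x -> u <> y -> u <> z -> False.
Proof.
  intros. destruct H2 as [|[|]]; destruct H3 as [|[|]]; destruct H4 as [|[|]];
  destruct H5 as [|[|]]; subst; congruence.
Qed.

Lemma seg_vert psi b f : nondegenerate psi -> Seg psi b (psi f) -> vertB b f.
Proof.
  intros [N1 _] Hs. apply NNPP; intro Hn.
  destruct (N1 f) as (b1&b2&b3&d12&d13&d23&Hiff&_).
  set (o1 := ((fst f - 1)%Z, snd f)). set (o2 := (fst f, (snd f - 1)%Z)).
  set (o3 := ((fst f - 1)%Z, (snd f - 1)%Z)).
  assert (V1: vertB o1 f) by (unfold o1, vertB; simpl; lia).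
  assert (V2: vertB o2 f) by (unfold o2, vertB; simpl; lia).
  assert (V3: vertB o3 f) by (unfold o3, vertB; simpl; lia).
  apply (pigeon4 b1 b2 b3 o1 o2 o3 b); auto.
  - apply Hiff, vert_seg; auto.
  - apply Hiff, vert_seg; auto.
  - apply Hiff, vert_seg; auto.
  - apply Hiff; auto.
  - unfold o1, o2; intro E; injection E; lia.
  - unfold o1, o3; intro E; injection E; lia.
  - unfold o2, o3; intro E; injection E; lia.
  - intro E; subst; auto.
  - intro E; subst; auto.
  - intro E; subst; auto.
Qed.

Lemma ext_mem X z : extreme X z -> X z.
Proof. intros [H _]; auto. Qed.
Lemma int_mem X z : rel_interior X z -> X z.
Proof. intros [H _]; auto. Qed.

Lemma int_unique psi b b' f : nondegenerate psi ->
  rel_interior (Seg psi b) (psi f) -> rel_interior (Seg psi b') (psi f) -> b = b'.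
Proof.
  intros [N1 _] H H'.
  destruct (N1 f) as (b1&b2&b3&d12&d13&d23&Hiff&e1&e2&_).
  assert (K: forall c, rel_interior (Seg psi c) (psi f) -> c = b3).
  { intros c Hc. destruct (proj1 (Hiff c) (int_mem _ _ Hc)) as [E|[E|E]]; subst; auto;
    destruct Hc as [_ Hc]; contradiction. }
  rewrite (K b H), (K b' H'); auto.
Qed.

Lemma tedge_info psi v v' : nondegenerate psi -> Tedge psi v v' ->
  exists b, rel_interior (Seg psi b) (psi v) /\ extreme (Seg psi b) (psi v') /\
    vertB b v /\ vertB b v' /\ v <> v'.
Proof.
  intros ND (b&Hi&He). exists b. split; [exact Hi|]. split; [exact He|]. split; [|split].
  - apply (seg_vert psi b v ND), int_mem; auto.
  - apply (seg_vert psi b v' ND), ext_mem; auto.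
  - intro E; subst. destruct Hi; contradiction.
Qed.

Lemma white_exists psi F o : nondegenerate psi -> oriented_towards_ends psi F o ->
  forall w, exists b, matchedM psi o w b.
Proof.
  intros ND [O1 _] w. destruct (O1 w) as (_&_&_&Hb).
  set (p := psi (fst (fst (o w)))) in *. set (q := psi (snd (fst (o w)))) in *.
  destruct ND as (_&N2&_).
  assert (H: forall z, closed_seg p q z ->
    conv3 (psi w) (psi ((fst w + 1)%Z, snd w)) (psi (fst w, (snd w + 1)%Z)) z /\
    ~ oconv3 (psi w) (psi ((fst w + 1)%Z, snd w)) (psi (fst w, (snd w + 1)%Z)) z).
  { intros z Hz. destruct (Hb z Hz) as [[A B] _]. split; auto. }
  unfold matchedM. fold p q.
  destruct (white_side _ _ _ p q (N2 w) H) as [K|[K|K]]; destruct w as [w1 w2]; simpl in *.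
  - exists (w1, w2). split. left; auto.
    intros z Hz. unfold Seg; simpl. apply cseg_conv_12, K; auto.
  - exists ((w1 - 1)%Z, w2). split. right; right; auto.
    intros z Hz. unfold Seg; simpl. rewrite Z.sub_add. apply cseg_conv_13, K; auto.
  - exists (w1, (w2 - 1)%Z). split. right; left; auto.
    intros z Hz. unfold Seg; simpl. rewrite Z.sub_add. apply cseg_conv_23, K; auto.
Qed.

Lemma white_unique psi F o w b b' : nondegenerate psi -> oriented_towards_ends psi F o ->
  matchedM psi o w b -> matchedM psi o w b' -> b = b'.
Proof.
  intros ND [O1 _] [_ H] [_ H']. destruct (O1 w) as (Te&_).
  destruct (tedge_info psi _ _ ND Te) as (c&_&_&_&_&Hn).
  apply (pair_black b b' (fst (fst (o w))) (snd (fst (o w)))); auto;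
  apply (seg_vert psi _ _ ND); first [apply H | apply H']; first [apply cseg_l | apply cseg_r].
Qed.

Lemma de_make psi F v v' w a w' b : DualEdge psi F v v' w a -> DualEdge psi F v v' w' b ->
  w <> w' -> DualEdge psi F v v' w w'.
Proof.
  intros (T&NF&_&B1) (_&_&_&B2) Hn. split; [auto|split;[auto|split;[auto|]]].
  intros z Hz. split; [apply (B1 z Hz) | apply (B2 z Hz)].
Qed.

Lemma de_sym psi F v v' a b : DualEdge psi F v v' a b -> DualEdge psi F v v' b a.
Proof.
  intros (T&NF&Hn&B). split; [auto|split;[auto|split;[auto|]]].
  intros z Hz. destruct (B z Hz); split; auto.
Qed.

Lemma cycA psi F o v v' w w' y : oriented_towards_ends psi F o ->
  DualEdge psi F v v' w w' -> DualEdge psi F v v' w' y ->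
  o w = ((v, v'), w') -> o w' = ((v, v'), y) -> False.
Proof.
  intros [O1 [O2 [O3 _]]] D1 D2 Ew Ew'.
  destruct (O2 _ _ _ _ D1) as [_ Nb].
  assert (Hy: y <> w) by (intro; subst; apply Nb; auto).
  assert (Dwy: DualEdge psi F v v' w y) by (apply (de_make psi F v v' w w' y w'); auto; apply de_sym; auto).
  destruct (O2 _ _ _ _ Dwy) as [[E|E] _].
  - rewrite Ew in E. injection E as E. subst. destruct D2 as (_&_&Hn&_). congruence.
  - assert (K: Nat.iter 3 (step o) w = Nat.iter 0 (step o) w).
    { simpl. unfold step at 3. rewrite Ew. simpl. unfold step at 2. rewrite Ew'. simpl.
      unfold step. rewrite E. reflexivity. }
    apply O3 in K. discriminate.
Qed.

Lemma cyc psi F o v v' w x w' y : oriented_towards_ends psi F o ->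
  DualEdge psi F v v' w x -> DualEdge psi F v v' w' y ->
  o w = ((v, v'), x) -> o w' = ((v, v'), y) -> w = w'.
Proof.
  intros OT D1 D2 Ew Ew'. apply NNPP; intro Hn.
  assert (D: DualEdge psi F v v' w w') by (apply (de_make psi F v v' w x w' y); auto).
  destruct OT as [O1 [O2 O34]].
  destruct (O2 _ _ _ _ D) as [[E|E] _].
  - apply (cycA psi F o v v' w w' y); [split; auto| auto | auto | auto | auto].
  - apply (cycA psi F o v v' w' w x); [split; auto| | auto | auto | auto].
    apply (de_make psi F v v' w' y w x); auto.
Qed.

Lemma matched_info psi F o w b v v' x : nondegenerate psi -> oriented_towards_ends psi F o ->
  o w = ((v, v'), x) -> matchedM psi o w b ->
  rel_interior (Seg psi b) (psi v) /\ extreme (Seg psi b) (psi v') /\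
  vertB b v /\ vertB b v' /\ v <> v' /\ ~ F v v' /\ DualEdge psi F v v' w x.
Proof.
  intros ND [O1 _] Ew [_ H]. pose proof (O1 w) as D. rewrite Ew in D, H. simpl in D, H.
  pose proof D as (Te&NF&Hn&B).
  destruct (tedge_info psi _ _ ND Te) as (c&Hi&He&Vc&Vc'&Hvv).
  assert (Vb: vertB b v) by (apply (seg_vert psi b v ND), H, cseg_l).
  assert (Vb': vertB b v') by (apply (seg_vert psi b v' ND), H, cseg_r).
  assert (c = b) by (apply (pair_black c b v v'); auto). subst c.
  split; [exact Hi|]. split; [exact He|]. auto.
Qed.

Lemma black_unique psi F o b w w' : nondegenerate psi -> spanning_forest psi F ->
  oriented_towards_ends psi F o ->
  matchedM psi o w b -> matchedM psi o w' b -> w = w'.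
Proof.
  intros ND SF OT M M'.
  destruct (o w) as [[v v'] x] eqn:Ew. destruct (o w') as [[u u'] y] eqn:Ew'.
  destruct (matched_info psi F o w b v v' x ND OT Ew M) as (I1&E1&V1&V1'&N1&F1&D1).
  destruct (matched_info psi F o w' b u u' y ND OT Ew' M') as (I2&E2&V2&V2'&N2&F2&D2).
  pose proof ND as (_&_&N3). destruct (N3 b) as [D [HD Hu]].
  assert (v = u) by (rewrite <- (Hu v I1), <- (Hu u I2); auto). subst u.
  destruct SF as (S1&S2&_). destruct (S2 v) as [t [Ft _]].
  destruct (tedge_info psi _ _ ND (S1 _ _ Ft)) as (c&Hi&He&Vc&Vc'&Hvt).
  assert (c = b) by (apply (int_unique psi c b v ND); auto). subst c.
  assert (v' = u').
  { apply (vert_pigeon b v t v' u'); auto; intro E; subst; auto. }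
  subst u'. apply (cyc psi F o v v' w x w' y); auto.
Qed.

Lemma cseg_sub x y d z : closed_seg x y d -> closed_seg d y z -> closed_seg x y z.
Proof.
  intros (r&Hr&R1&R2) (s&Hs&S1&S2). exists (s + (1-s)*r). split; [split; nra|].
  rewrite S1, S2, R1, R2. split; ring.
Qed.

Lemma conv3_convex a b c p q z : conv3 a b c p -> conv3 a b c q -> closed_seg p q z -> conv3 a b c z.
Proof.
  intros (u1&u2&u3&?&?&?&?&P1&P2) (v1&v2&v3&?&?&?&?&Q1&Q2) (t&?&E1&E2).
  exists ((1-t)*u1 + t*v1), ((1-t)*u2 + t*v2), ((1-t)*u3 + t*v3).
  repeat split; nra.
Qed.

Lemma vertB_eq b f : vertB b f ->
  f = ((fst b + 1)%Z, snd b) \/ f = (fst b, (snd b + 1)%Z) \/ f = ((fst b + 1)%Z, (snd b + 1)%Z).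
Proof. unfold vertB; intros [[? ?]|[[? ?]|[? ?]]]; [left|right;left|right;right]; apply eq_pair; auto. Qed.
Lemma vertW_eq w f : vertW w f ->
  f = w \/ f = ((fst w + 1)%Z, snd w) \/ f = (fst w, (snd w + 1)%Z).
Proof. unfold vertW; intros [[? ?]|[[? ?]|[? ?]]]; [left|right;left|right;right]; apply eq_pair; auto. Qed.

Ltac cperm := solve [ assumption | apply conv3_12; assumption | apply conv3_23; assumption
  | apply conv3_12; apply conv3_23; assumption | apply conv3_23; apply conv3_12; assumption
  | apply conv3_12; apply conv3_23; apply conv3_12; assumption ].

Lemma seg_perm psi b d t q : vertB b d -> vertB b t -> vertB b q -> d <> t -> d <> q -> t <> q ->
  forall z, Seg psi b z <-> conv3 (psi t) (psi q) (psi d) z.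
Proof.
  intros Hd Ht Hq n1 n2 n3 z. unfold Seg.
  apply vertB_eq in Hd, Ht, Hq.
  destruct Hd as [|[|]]; destruct Ht as [|[|]]; destruct Hq as [|[|]]; subst;
  try congruence; split; intro; cperm.
Qed.

Lemma tri_side psi w f g z : ~ collinear (psi w) (psi ((fst w + 1)%Z, snd w)) (psi (fst w, (snd w + 1)%Z)) ->
  vertW w f -> vertW w g -> f <> g -> closed_seg (psi f) (psi g) z -> TriBdry psi w z.
Proof.
  intros Hc Hf Hg n Hz. unfold TriBdry, Tri, TriInt.
  apply side3; auto.
  apply vertW_eq in Hf, Hg.
  destruct Hf as [|[|]]; destruct Hg as [|[|]]; subst; try congruence; tauto.
Qed.

Lemma seg_in psi b f g z : vertB b f -> vertB b g -> closed_seg (psi f) (psi g) z -> Seg psi b z.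
Proof. intros; apply (conv3_convex _ _ _ (psi f) (psi g)); auto; apply vert_seg; auto. Qed.

Lemma black_exists psi F o b : nondegenerate psi -> spanning_forest psi F ->
  oriented_towards_ends psi F o -> exists w, matchedM psi o w b.
Proof.
  intros ND SF OT.
  pose proof ND as (_&N2&N3). destruct (N3 b) as [D [HD Hu]].
  destruct SF as (S1&S2&_). destruct (S2 D) as [t [Ft Hut]].
  destruct (tedge_info psi _ _ ND (S1 _ _ Ft)) as (c&Hi&He&Vc&Vt&HDt).
  assert (c = b) by (apply (int_unique psi c b D ND); auto). subst c.
  destruct (vert_third b D t Vc Vt HDt) as (Q&VQ&HQD&HQt).
  assert (EQ: extreme (Seg psi b) (psi Q)).
  { apply NNPP; intro K. apply HQD; symmetry; apply Hu. split; auto. apply vert_seg; auto. }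
  assert (TDQ: Tedge psi D Q) by (exists b; auto).
  assert (NF: ~ F D Q) by (intro K; apply HQt; symmetry; apply Hut; auto).
  destruct (white_pair b D Q Vc VQ (fun e => HQD (eq_sym e))) as (w1&A1&W1D&W1Q).
  destruct (white_pair b t Q Vt VQ (fun e => HQt (eq_sym e))) as (w2&A2&W2t&W2Q).
  assert (Hw: w1 <> w2).
  { intro e; subst w2. apply (three_common w1 b D Q t); auto. }
  assert (Hmid: closed_seg (psi t) (psi Q) (psi D)).
  { apply (nonext_gen (Seg psi b)).
    - apply seg_perm; auto.
    - destruct HD; auto. }
  assert (DE: DualEdge psi F D Q w1 w2).
  { split; [auto|split;[auto|split;[auto|]]]. intros z Hz. split.
    - apply (tri_side psi w1 D Q); auto.
    - apply (tri_side psi w2 t Q); auto. apply (cseg_sub _ _ (psi D)); auto. }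
  destruct OT as [O1 [O2 _]].
  destruct (O2 _ _ _ _ DE) as [[E|E] _].
  - exists w1. split; auto. rewrite E; simpl. intros z Hz. apply (seg_in psi b D Q); auto.
  - exists w2. split; auto. rewrite E; simpl. intros z Hz. apply (seg_in psi b D Q); auto.
Qed.

Theorem mainTheorem7 (psi : Face -> pt) (F : Face -> Face -> Prop)
    (o : White -> (Face * Face) * White) :
  is_Tgraph psi -> nondegenerate psi -> spanning_forest psi F ->
  oriented_towards_ends psi F o ->
  perfect_matching (matchedM psi o).
Proof.
  intros _ ND SF OT. split; [|split].
  - intros w b [H _]; auto.
  - intros w. destruct (white_exists psi F o ND OT w) as [b Hb]. exists b. split; auto.
    intros b' Hb'. apply (white_unique psi F o w b b'); auto.
  - intros b. destruct (black_exists psi F o b ND SF OT) as [w Hw]. exists w. split; auto.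
    intros w' Hw'. apply (black_unique psi F o b w w'); auto.
Qed.
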